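(* Let $n$ be a power of two, $\Delta=50+1000\log n$ and $m=1000\Delta^2$. There exists a function $h:\{0,1\}^{\le 3\Delta}\to\{0,1,\dots,m-1\}$ such that for all $z\in\{0,1\}^{\le 3\Delta}$ and all $z'\neq z$ obtained from $z$ by at most two adjacent transpositions, or by at most two substitutions, or by at most one deletion and at most one insertion, we have $h(z)\neq h(z')$.
   Context: Logarithms are base $2$. $\{0,1\}^{\le k}$ is the set of binary strings of length at most $k$. An adjacent transposition swaps two consecutive coordinates; a substitution flips one bit; a deletion removes one coordinate; an insertion adds one bit at some position. *)

(* Defs.v *)
From mathcomp Require Import all_boot.
Set Implicit Arguments. Unset Strict Implicit. Unset Printing Implicit Defensive.

Definition adj_transp (z z' : seq bool) : Prop :=
  exists i, i.+1 < size z /\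
    z' = take i z ++ [:: nth false z i.+1; nth false z i] ++ drop i.+2 z.

Definition substitution (z z' : seq bool) : Prop :=
  exists i, i < size z /\ z' = set_nth false z i (~~ nth false z i).

Definition deletion (z z' : seq bool) : Prop :=
  exists i, i < size z /\ z' = take i z ++ drop i.+1 z.

Definition insertion (z z' : seq bool) : Prop :=
  exists i b, i <= size z /\ z' = take i z ++ b :: drop i z.

Definition opt (R : seq bool -> seq bool -> Prop) z z' : Prop := z' = z \/ R z z'.

Definition rcomp (R1 R2 : seq bool -> seq bool -> Prop) z z' : Prop :=
  exists y, R1 z y /\ R2 y z'.

Definition close_edit (z z' : seq bool) : Prop :=
  rcomp (opt adj_transp) (opt adj_transp) z z' \/
  rcomp (opt substitution) (opt substitution) z z' \/
  rcomp (opt deletion) (opt insertion) z z' \/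
  rcomp (opt insertion) (opt deletion) z z'.

(* Main.v *)
Require Import Defs.
From mathcomp Require Import all_boot.
From mathcomp Require Import zify.

Definition TF (z z' : seq bool) := exists a p q b, z = a ++ p :: q :: b /\ z' = a ++ q :: p :: b.
Definition SF (z z' : seq bool) := exists a p b, z = a ++ p :: b /\ z' = a ++ (~~ p) :: b.
Definition DF (z z' : seq bool) := exists a p b, z = a ++ p :: b /\ z' = a ++ b.
Definition one z z' := z' = z \/ TF z z' \/ SF z z' \/ DF z z' \/ DF z' z.

Lemma one_sym z z' : one z z' -> one z' z.
Proof.
case=> [->|[[a [p [q [b [-> ->]]]]]|[[a [p [b [-> ->]]]]|[H|H]]]].
- by left.
- by right; left; exists a, q, p, b.
- by right; right; left; exists a, (~~ p), b; rewrite negbK.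
- by do 4 right.
- by do 3 right; left.
Qed.

Lemma split2 (z : seq bool) i : i.+1 < size z ->
  z = take i z ++ nth false z i :: nth false z i.+1 :: drop i.+2 z.
Proof.
move=> H; rewrite -(drop_nth false) // -(drop_nth false) ?(ltnW H) //.
by rewrite cat_take_drop.
Qed.

Lemma split1 (z : seq bool) i : i < size z ->
  z = take i z ++ nth false z i :: drop i.+1 z.
Proof. by move=> H; rewrite -(drop_nth false) // cat_take_drop. Qed.

Lemma at_TF z z' : opt adj_transp z z' -> one z z'.
Proof.
case=> [->|[i [H ->]]]; first by left.
right; left; exists (take i z), (nth false z i), (nth false z i.+1), (drop i.+2 z).
by split => //; apply: split2.
Qed.

Lemma sub_SF z z' : opt substitution z z' -> one z z'.
Proof.
case=> [->|[i [H ->]]]; first by left.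
right; right; left; exists (take i z), (nth false z i), (drop i.+1 z).
by split; [apply: split1| rewrite set_nthE H].
Qed.

Lemma del_DF z z' : opt deletion z z' -> one z z'.
Proof.
case=> [->|[i [H ->]]]; first by left.
do 3 right; left; exists (take i z), (nth false z i), (drop i.+1 z).
by split => //; apply: split1.
Qed.

Lemma ins_DF z z' : opt insertion z z' -> one z z'.
Proof.
case=> [->|[i [b [H ->]]]]; first by left.
do 4 right; exists (take i z), b, (drop i z).
by split => //; rewrite cat_take_drop.
Qed.

Lemma close_one z z' : close_edit z z' -> exists y, one z y /\ one y z'.
Proof.
case=> [[y [H1 H2]]|[[y [H1 H2]]|[[y [H1 H2]]|[y [H1 H2]]]]]; exists y.
- by split; apply: at_TF.
- by split; apply: sub_SF.
- by split; [apply: del_DF|apply: ins_DF].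
- by split; [apply: ins_DF|apply: del_DF].
Qed.

Definition tr i (z : seq bool) := take i z ++ nth false z i.+1 :: nth false z i :: drop i.+2 z.
Definition fl i (z : seq bool) := take i z ++ ~~ nth false z i :: drop i.+1 z.
Definition dl i (z : seq bool) := take i z ++ drop i.+1 z.
Definition ins i b (z : seq bool) := take i z ++ b :: drop i z.

Definition ops1 (z : seq bool) : seq (seq bool) :=
  z :: [seq tr i z | i <- iota 0 (size z)] ++ [seq fl i z | i <- iota 0 (size z)]
    ++ [seq dl i z | i <- iota 0 (size z)]
    ++ [seq ins i b z | i <- iota 0 (size z).+1, b <- [:: true; false]].

Lemma take_sz (a l : seq bool) : take (size a) (a ++ l) = a.
Proof. by rewrite take_size_cat. Qed.
Lemma drop_sz (a l : seq bool) k : drop (size a + k) (a ++ l) = drop k l.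
Proof. by rewrite drop_cat ltnNge leq_addr /= addKn. Qed.
Lemma nth_sz (a l : seq bool) k : nth false (a ++ l) (size a + k) = nth false l k.
Proof. by rewrite nth_cat ltnNge leq_addr /= addKn. Qed.

Lemma one_ops1 z z' : one z z' -> z' \in ops1 z.
Proof.
case=> [->|[[a [p [q [b [-> ->]]]]]|[[a [p [b [-> ->]]]]|[[a [p [b [-> ->]]]]|[a [p [b [-> ->]]]]]]]].
- by rewrite inE eqxx.
- rewrite inE mem_cat; apply/orP; right; apply/orP; left.
  have -> : a ++ q :: p :: b = tr (size a) (a ++ p :: q :: b).
    by rewrite /tr take_sz -[(size a).+2]addn2 -[(size a).+1]addn1 nth_sz drop_sz -(addn0 (size a)) nth_sz /= drop0.
  by apply/mapP; exists (size a) => //; rewrite mem_iota size_cat /=; lia.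
- rewrite inE mem_cat; apply/orP; right; rewrite mem_cat; apply/orP; right.
  rewrite mem_cat; apply/orP; left.
  have -> : a ++ ~~ p :: b = fl (size a) (a ++ p :: b).
    by rewrite /fl take_sz -[(size a).+1]addn1 drop_sz -(addn0 (size a)) nth_sz /= drop0.
  by apply/mapP; exists (size a) => //; rewrite mem_iota size_cat /=; lia.
- rewrite inE mem_cat; apply/orP; right; rewrite mem_cat; apply/orP; right.
  rewrite mem_cat; apply/orP; right; rewrite mem_cat; apply/orP; left.
  have -> : a ++ b = dl (size a) (a ++ p :: b).
    by rewrite /dl take_sz -[(size a).+1]addn1 drop_sz /= drop0.
  by apply/mapP; exists (size a) => //; rewrite mem_iota size_cat /=; lia.
- have -> : a ++ p :: b = ins (size a) p (a ++ b).
    by rewrite /ins take_sz -(addn0 (size a)) drop_sz drop0.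
  have H : ins (size a) p (a ++ b) \in [seq ins i b0 (a ++ b) | i <- iota 0 (size (a ++ b)).+1, b0 <- [:: true; false]].
    apply/allpairsP; exists (size a, p) => /=; split => //.
      by rewrite -[0 :: _]/(iota 0 (size (a ++ b)).+1) mem_iota size_cat; lia.
    by case: p.
  by rewrite /ops1 inE 3!mem_cat H !orbT.
Qed.

Lemma size_ops1 z : size (ops1 z) = 5 * size z + 3.
Proof.
by rewrite /ops1 -cat1s 4!size_cat size_allpairs !size_map !size_iota /=; lia.
Qed.

Lemma ops1_size z y : y \in ops1 z -> size y <= size z + 1.
Proof.
rewrite /ops1 in_cons 3!mem_cat => /orP[/eqP->|/orP[H|/orP[H|/orP[H|H]]]]; first by rewrite addn1.
- move: H; case/mapP=> i; rewrite mem_iota => /andP[_ Hi] ->; rewrite /tr size_cat /= size_take size_drop; case: ifP; lia.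
- move: H; case/mapP=> i; rewrite mem_iota => /andP[_ Hi] ->; rewrite /fl size_cat /= size_take size_drop; case: ifP; lia.
- move: H; case/mapP=> i; rewrite mem_iota => /andP[_ Hi] ->; rewrite /dl size_cat /= size_take size_drop; case: ifP; lia.
- move: H; case/allpairsP=> [[i b]] /= [_ _ ->]; rewrite /ins size_cat /= size_take size_drop; case: ifP; lia.
Qed.

Lemma size_flat_bound (T : eqType) (U : Type) (f : T -> seq U) (s : seq T) B :
  (forall y, y \in s -> size (f y) <= B) -> size (flatten (map f s)) <= size s * B.
Proof.
elim: s => [|x s IH] H //=.
rewrite size_cat mulSn leq_add //; first by apply: H; rewrite inE eqxx.
by apply: IH => y Hy; apply: H; rewrite inE Hy orbT.
Qed.

Definition L z := flatten [seq ops1 y | y <- ops1 z].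

Lemma size_L z : size (L z) <= (5 * size z + 3) * (5 * size z + 8).
Proof.
apply: leq_trans (@size_flat_bound _ _ _ _ (5 * size z + 8) _) _.
  move=> y Hy; apply: leq_trans; first by apply: eq_leq; exact: size_ops1.
  have H := @ops1_size z y Hy.
  by apply: (leq_trans (leq_add (leq_mul (leqnn 5) H) (leqnn 3))); lia.
by apply: leq_mul => //; apply: eq_leq; exact: size_ops1.
Qed.

Lemma close_L z z' : close_edit z z' \/ close_edit z' z -> z' \in L z.
Proof.
case=> [/close_one [y [H1 H2]]|/close_one [y [H1 H2]]]; apply/flatten_mapP; exists y.
- exact: one_ops1.
- exact: one_ops1.
- by apply: one_ops1; apply: one_sym.
- by apply: one_ops1; apply: one_sym.
Qed.

Lemma fresh m (s : seq 'I_m) : size s < m -> exists i : 'I_m, i \notin s.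
Proof.
move=> Hs; case: (pickP (fun i : 'I_m => i \notin s)) => [i Hi|H]; first by exists i.
have : #|'I_m| <= #|s|.
  apply: subset_leq_card; apply/subsetP => i _; have := H i; by rewrite /= => /negbFE.
by rewrite card_ord => /leq_trans /(_ (card_size s)); rewrite leqNgt Hs.
Qed.

Lemma coloring m (N : seq bool -> seq (seq bool)) (adj : seq bool -> seq bool -> Prop)
  (S : seq (seq bool)) : 0 < m ->
  (forall x y, adj x y -> adj y x) -> (forall x y, x \in S -> adj x y -> y \in N x) ->
  (forall x, x \in S -> size (N x) < m) ->
  exists c : seq bool -> 'I_m, forall z z', z \in S -> z' \in S -> z' <> z -> adj z z' -> c z <> c z'.
Proof.
move=> m0 Hsym; elim: S => [|x S IH] HN Hm.
  by exists (fun _ => Ordinal m0).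
have [c' Hc'] : exists c : seq bool -> 'I_m, forall z z', z \in S -> z' \in S -> z' <> z -> adj z z' -> c z <> c z'.
  by apply: IH => [y w Hy|y Hy]; [apply: HN; rewrite inE Hy orbT|apply: Hm; rewrite inE Hy orbT].
have Hsz : size (map c' (N x)) < m by rewrite size_map; apply: Hm; rewrite inE eqxx.
have [col Hcol] := @fresh m _ Hsz.
have key : forall w, w \in x :: S -> w <> x -> adj x w -> col <> c' w.
  move=> w _ _ Hw Heq; move: Hcol; rewrite Heq; case/negP; apply: map_f.
  by apply: HN => //; rewrite inE eqxx.
exists (fun z => if z == x then col else c' z) => z z' Hz Hz' Hne Hadj.
case: (eqVneq z x) => [Ezx|Nzx]; case: (eqVneq z' x) => [Ezx'|Nzx'].
- by move=> _; apply: Hne; rewrite Ezx Ezx'.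
- apply: (key z' Hz'); first exact/eqP.
  by rewrite -Ezx.
- move=> E; apply: (key z Hz); first exact/eqP.
    by apply: Hsym; rewrite -Ezx'.
  by rewrite E.
- move: Hz Hz'; rewrite !inE (negbTE Nzx) (negbTE Nzx') /= => Hz Hz'.
  exact: Hc'.
Qed.

Fixpoint allseqs n : seq (seq bool) :=
  if n is n'.+1 then [::] :: [seq b :: s | b <- [:: true; false], s <- allseqs n']
  else [:: [::]].

Lemma allseqsP n s : (s \in allseqs n) = (size s <= n).
Proof.
elim: n s => [|n IH] [|b s] //.
rewrite (_ : allseqs n.+1 = [::] :: [seq b :: s | b <- [:: true; false], s <- allseqs n]) //.
rewrite in_cons -[b :: s == [::]]/false orFb -[size (b :: s) <= n.+1]/(size s <= n) -IH.
apply/allpairsP/idP.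
  by case=> [[b' s']] /= [_ Hs E]; case: E => _ ->.
by move=> Hs; exists (b, s); split => //; case: b.
Qed.

Theorem lemma7 (n k : nat) (hn : n = 2 ^ k) :
  let Delta := 50 + 1000 * k in
  let m := 1000 * Delta ^ 2 in
  exists h : seq bool -> 'I_m,
    forall z z' : seq bool,
      size z <= 3 * Delta -> size z' <= 3 * Delta ->
      z' <> z -> close_edit z z' -> h z <> h z'.
Proof.
move=> Delta m.
have m0 : 0 < m by rewrite /m /Delta muln_gt0 expn_gt0 addn_gt0.
have H1 : forall x y, (close_edit x y \/ close_edit y x) -> (close_edit y x \/ close_edit x y).
  by move=> x y [H|H]; [right|left].
have H2 : forall x y, x \in allseqs (3 * Delta) -> (close_edit x y \/ close_edit y x) -> y \in L x.
  by move=> x y _ H; apply: close_L.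
have H3 : forall x, x \in allseqs (3 * Delta) -> size (L x) < m.
  move=> x; rewrite allseqsP => Hx.
  apply: leq_ltn_trans (size_L x) _.
  apply: (@leq_ltn_trans ((5 * (3 * Delta) + 3) * (5 * (3 * Delta) + 8))).
    by apply: leq_mul; rewrite leq_add2r leq_mul2l Hx orbT.
  rewrite /m -mulnn /Delta; nia.
have [c Hc] := @coloring m L (fun z z' => close_edit z z' \/ close_edit z' z)
  (allseqs (3 * Delta)) m0 H1 H2 H3.
exists c => z z' Hz Hz' Hne Hcl; apply: Hc; rewrite ?allseqsP //; by left.
Qed.
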